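(* Let $p\ge1$, $m=2^p$, $U_m=\frac{1}{\sqrt m}H(m)$, and let two identical particles be injected in an arbitrary pair of distinct input modes $a<b$ (input state $(a,b)$). Then the number of suppressed output states $(i,j)$, $1\le i\le j\le m$, equals $m^2/4$ if the particles are bosons (fraction $\frac12\frac{m}{m+1}$), and equals $\frac12 m(m+1)-\frac{m^2}{4}$ if the particles are fermions (fraction $\frac12\frac{m+2}{m+1}$); i.e. the same numbers as for the input $(1,2)$.
   Context: For $m=2^p$, the Sylvester matrix $H(m)$ is defined recursively by $H(1)=[1]$ and $H(2^p)=\begin{bmatrix}H(2^{p-1})&H(2^{p-1})\\ H(2^{p-1})&-H(2^{p-1})\end{bmatrix}$, rows and columns indexed $1,\dots,m$. An $n$-particle state on $m$ modes is a nondecreasing tuple $\vec t=(t_1\le\dots\le t_n)$ with $t_i\in\{1,\dots,m\}$; $\mu_k(\vec t)=|\{i:t_i=k\}|$. For input $\vec s$ and output $\vec t$, the scattering matrix is $S_{i,j}=U_{t_i,s_j}$; the bosonic amplitude is $\mathrm{perm}\,S/\sqrt{\prod_k\mu_k(\vec s)!\prod_k\mu_k(\vec t)!}$ and the fermionic amplitude is $\det S/\sqrt{\prod_k\mu_k(\vec s)!\prod_k\mu_k(\vec t)!}$. An output state is suppressed if its amplitude is zero. *)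

(* Defs.v *)
From HB Require Import structures.
From mathcomp Require Import all_boot all_order all_algebra all_fingroup all_field.
Set Implicit Arguments. Unset Strict Implicit. Unset Printing Implicit Defensive.
Import Order.TTheory GRing.Theory Num.Theory.
Local Open Scope ring_scope.

(* Entries of the Sylvester matrix H(2^p), 0-indexed (paper index k = our k+1),
   following the recursive block definition
   H(2^p) = [[H(2^(p-1)), H(2^(p-1))], [H(2^(p-1)), -H(2^(p-1))]]. *)
Fixpoint sylv (p i j : nat) : int :=
  match p with
  | 0 => 1
  | p'.+1 =>
      let h := (2 ^ p')%N in
      if (i < h)%N then
        if (j < h)%N then sylv p' i j else sylv p' i (j - h)
      else
        if (j < h)%N then sylv p' (i - h) j else - sylv p' (i - h) (j - h)
  end.

Definition Sylvester (p : nat) : 'M[algC]_(2 ^ p) :=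
  \matrix_(i, j) (sylv p i j)%:~R.

Definition Umat (p : nat) : 'M[algC]_(2 ^ p) :=
  (sqrtC (2 ^ p)%:R)^-1 *: Sylvester p.

Definition is_state (n m : nat) (t : n.-tuple 'I_m) : bool :=
  sorted (fun x y : 'I_m => (x <= y)%N) t.

Definition mu (n m : nat) (k : 'I_m) (t : n.-tuple 'I_m) : nat := count_mem k t.

Definition scat (n m : nat) (U : 'M[algC]_m) (s t : n.-tuple 'I_m) : 'M[algC]_n :=
  \matrix_(i, j) U (tnth t i) (tnth s j).

Definition permanent (n : nat) (A : 'M[algC]_n) : algC :=
  \sum_(σ : 'S_n) \prod_(i < n) A i (σ i).

Definition normfac (n m : nat) (s t : n.-tuple 'I_m) : algC :=
  sqrtC ((\prod_(k < m) (mu k s)`! * \prod_(k < m) (mu k t)`!)%N)%:R.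

Definition boson_amp (n m : nat) (U : 'M[algC]_m) (s t : n.-tuple 'I_m) : algC :=
  permanent (scat U s t) / normfac s t.

Definition fermion_amp (n m : nat) (U : 'M[algC]_m) (s t : n.-tuple 'I_m) : algC :=
  \det (scat U s t) / normfac s t.

(* Main.v *)
Require Import Defs.
From HB Require Import structures.
From mathcomp Require Import all_boot all_order all_algebra all_fingroup all_field.
From mathcomp Require Import ring zify.
Import Order.TTheory GRing.Theory Num.Theory.
Local Open Scope ring_scope.

Lemma sylv_sq p i j : sylv p i j * sylv p i j = 1.
Proof.
elim: p i j => [|p IH] i j //=.
by case: ifP => _; case: ifP => _; rewrite ?mulrNN IH.
Qed.

Lemma sylv_lo p x : (x < 2 ^ p)%N -> forall a,
  sylv p.+1 x a = if (a < 2 ^ p)%N then sylv p x a else sylv p x (a - 2 ^ p).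
Proof. by move=> hx a /=; rewrite hx. Qed.

Lemma sylv_hi p x a :
  sylv p.+1 (x + 2 ^ p) a = if (a < 2 ^ p)%N then sylv p x a else - sylv p x (a - 2 ^ p).
Proof. by rewrite /= ltnNge leq_addl /= addnK. Qed.

Lemma big_shift (F : nat -> int) h :
  \sum_(h <= i < h + h) F i = \sum_(0 <= i < h) F (i + h)%N.
Proof. by rewrite -{1}(add0n h) big_addn addnK. Qed.

Lemma big_half (F : nat -> int) h :
  \sum_(0 <= i < h + h) F i = \sum_(0 <= i < h) F i + \sum_(0 <= i < h) F (i + h)%N.
Proof. by rewrite -big_shift; apply: big_cat_nat; rewrite ?leq_addr. Qed.

Lemma big_half2 (F : nat -> int) h :
  \sum_(0 <= i < h + h) F i = \sum_(0 <= i < h) (F i + F (i + h)%N).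
Proof. by rewrite big_half big_split. Qed.

Lemma sylv_orth p a b : (a < 2 ^ p)%N -> (b < 2 ^ p)%N -> a != b ->
  \sum_(0 <= x < 2 ^ p) sylv p x a * sylv p x b = 0.
Proof.
elim: p a b => [|p IH] a b ha hb hab.
  by move: ha hb hab; rewrite expn0 !ltnS !leqn0 => /eqP-> /eqP->.
have e2 : (2 ^ p.+1 = 2 ^ p + 2 ^ p)%N by rewrite expnS mul2n addnn.
rewrite e2 big_half2.
under eq_big_nat => x /andP[_ hx] do rewrite !(@sylv_lo _ _ hx) !sylv_hi.
case ha': (a < 2 ^ p)%N; case hb': (b < 2 ^ p)%N.
- by rewrite big_split /= IH ?add0r.
- by rewrite big1 // => x _; rewrite mulrN subrr.
- by rewrite big1 // => x _; rewrite mulNr subrr.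
- under eq_bigr => x _ do rewrite mulrNN.
  rewrite big_split /= IH ?addr0 //.
  + by rewrite ltn_subLR // -?e2 // leqNgt ha'.
  + by rewrite ltn_subLR // -?e2 // leqNgt hb'.
  + apply: contra hab => /eqP H; apply/eqP.
    have ha2 : (2 ^ p <= a)%N by rewrite leqNgt ha'.
    have hb2 : (2 ^ p <= b)%N by rewrite leqNgt hb'.
    by rewrite -(subnK ha2) -(subnK hb2) H.
Qed.

Lemma I2_cases (i : 'I_2) : i = 0 \/ i = 1.
Proof. by case: i => [[|[|//]] Hi]; [left|right]; apply: val_inj. Qed.

Lemma S2_cases (s : 'S_2) : s = 1%g \/ s = tperm 0 1.
Proof.
have H10 : s 1 != s 0 by rewrite (inj_eq perm_inj).
case: (I2_cases (s 0)) => H0.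
- left; apply/permP => i; rewrite perm1.
  case: (I2_cases i) => ->; first by [].
  by case: (I2_cases (s 1)) H10 => ->; rewrite H0.
- right; apply/permP => i.
  case: (I2_cases i) => ->; first by rewrite tpermL.
  by rewrite tpermR; case: (I2_cases (s 1)) H10 => ->; rewrite H0.
Qed.

Lemma sum_S2 (F : 'S_2 -> algC) : \sum_(s : 'S_2) F s = F 1%g + F (tperm 0 1).
Proof.
rewrite (bigD1 1%g) // (bigD1 (tperm 0 1)) /=; last first.
  by apply/eqP => /permP/(_ 0); rewrite tpermL perm1.
rewrite big1 ?addr0 // => s /andP[H1 H2].
by case: (S2_cases s) => E; rewrite E eqxx in H1 H2.
Qed.

Lemma perm2 (A : 'M[algC]_2) : permanent A = A 0 0 * A 1 1 + A 0 1 * A 1 0.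
Proof.
rewrite /permanent sum_S2 !big_ord_recr !big_ord0 /= !mul1r !perm1.
rewrite (_ : widen_ord (leqnSn 1) ord_max = 0 :> 'I_2); last by apply: val_inj.
by rewrite (_ : ord_max = 1 :> 'I_2) ?tpermL ?tpermR //; apply: val_inj.
Qed.

Lemma det2' (A : 'M[algC]_2) : \det A = A 0 0 * A 1 1 - A 0 1 * A 1 0.
Proof.
rewrite /determinant sum_S2 !big_ord_recr !big_ord0 /= !mul1r !perm1.
rewrite odd_perm1 odd_tperm /= expr0 expr1 !mul1r mulN1r.
rewrite (_ : widen_ord (leqnSn 1) ord_max = 0 :> 'I_2); last by apply: val_inj.
by rewrite (_ : ord_max = 1 :> 'I_2) ?tpermL ?tpermR ?mulNr //; apply: val_inj.
Qed.

Lemma pm1 (z : int) : z * z = 1 -> z = 1 \/ z = -1.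
Proof. by move=> h; have := sqrf_eq1 z; rewrite expr2 h eqxx => /esym/orP[]/eqP; auto. Qed.

Lemma Umat_E p (i j : 'I_(2 ^ p)) :
  Umat p i j = (sqrtC (2 ^ p)%:R)^-1 * (sylv p i j)%:~R.
Proof. by rewrite /Umat /Sylvester !mxE. Qed.

Lemma c_neq0 p : (sqrtC (2 ^ p)%:R)^-1 != 0 :> algC.
Proof. by rewrite invr_eq0 sqrtC_eq0 pnatr_eq0 expn_eq0. Qed.

Lemma normfac_neq0 n m (s t : n.-tuple 'I_m) : normfac s t != 0.
Proof.
rewrite /normfac sqrtC_eq0 pnatr_eq0 muln_eq0 negb_or -!lt0n.
by rewrite !prodn_gt0 // => i; rewrite fact_gt0.
Qed.

Lemma tnth20 (T : Type) (x y : T) : tnth [tuple x; y] 0 = x. Proof. by []. Qed.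
Lemma tnth21 (T : Type) (x y : T) : tnth [tuple x; y] 1 = y. Proof. by []. Qed.

Definition chi p (a b x : nat) : int := sylv p x a * sylv p x b.

Lemma int_boson (u v w z : int) : u * u = 1 -> v * v = 1 -> w * w = 1 -> z * z = 1 ->
  (u * z + v * w == 0) = ((u * v) * (w * z) == -1).
Proof.
move=> /pm1[]-> /pm1[]-> /pm1[]-> /pm1[]-> //.
Qed.

Lemma int_fermion (u v w z : int) : u * u = 1 -> v * v = 1 -> w * w = 1 -> z * z = 1 ->
  (u * z - v * w == 0) = ((u * v) * (w * z) == 1).
Proof.
move=> /pm1[]-> /pm1[]-> /pm1[]-> /pm1[]-> //.
Qed.

Lemma boson_zero p (a b x y : 'I_(2 ^ p)) :
  (boson_amp (Umat p) [tuple a; b] [tuple x; y] == 0) = (chi p a b x * chi p a b y == -1).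
Proof.
rewrite /boson_amp mulf_eq0 invr_eq0 (negbTE (@normfac_neq0 _ _ _ _)) orbF perm2 !mxE /=.
rewrite !tnth20 !tnth21.
set c := (sqrtC _)^-1.
rewrite -[X in X == 0](_ : c * c * ((sylv p x a * sylv p y b + sylv p x b * sylv p y a)%:~R) = _); last first.
  by rewrite intrD !intrM; ring.
rewrite mulf_eq0 mulf_eq0 orbb (negbTE (c_neq0 p)) /= intr_eq0 /chi.
by rewrite int_boson ?sylv_sq.
Qed.

Lemma fermion_zero p (a b x y : 'I_(2 ^ p)) :
  (fermion_amp (Umat p) [tuple a; b] [tuple x; y] == 0) = (chi p a b x * chi p a b y == 1).
Proof.
rewrite /fermion_amp mulf_eq0 invr_eq0 (negbTE (@normfac_neq0 _ _ _ _)) orbF det2' !mxE /=.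
rewrite !tnth20 !tnth21.
set c := (sqrtC _)^-1.
rewrite -[X in X == 0](_ : c * c * ((sylv p x a * sylv p y b - sylv p x b * sylv p y a)%:~R) = _); last first.
  by rewrite intrB !intrM; ring.
rewrite mulf_eq0 mulf_eq0 orbb (negbTE (c_neq0 p)) /= intr_eq0 /chi.
by rewrite int_fermion ?sylv_sq.
Qed.
Lemma card_pairs m (Q : 2.-tuple 'I_m -> bool) :
  #|[set t : 2.-tuple 'I_m | Q t]| = (\sum_(x < m) \sum_(y < m) Q [tuple x; y])%N.
Proof.
rewrite -sum1dep_card big_mkcond /=.
rewrite (reindex (fun xy : 'I_m * 'I_m => [tuple xy.1; xy.2])) /=; last first.
  exists (fun t => (tnth t 0, tnth t 1)) => [[x y] _ //|t _].
  apply: eq_from_tnth => i; case: (I2_cases i) => ->; by [].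
rewrite pair_bigA; apply: eq_bigr => [[x y]] _ /=.
by case: (Q _).
Qed.

Definition bz (b : bool) : int := (b : nat)%:R.

Lemma sym_sum m (g : 'I_m -> 'I_m -> int) : (forall x y, g x y = g y x) ->
  2 * \sum_(x < m) \sum_(y < m) (bz (x <= y)%N * g x y) =
  \sum_(x < m) \sum_(y < m) g x y + \sum_(x < m) g x x.
Proof.
move=> gs.
rewrite mulr2n mulrDl mul1r.
rewrite [X in _ + X = _]exchange_big /=.
rewrite -big_split /=.
have -> : \sum_(x < m) g x x = \sum_(x < m) \sum_(y < m) (bz (x == y) * g x y).
  apply: eq_bigr => x _; rewrite (bigD1 x) //= big1 ?addr0 /bz ?eqxx ?mul1r //.
  by move=> y /negbTE; rewrite eq_sym => ->; rewrite mul0r.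
rewrite -big_split /=; apply: eq_bigr => x _; rewrite -!big_split /=.
apply: eq_bigr => y _; rewrite gs /bz.
case: (ltngtP x y) => h; rewrite ?(ltnW h) ?(leqNgt y x) ?(leqNgt x y) ?h //=.
- by case: eqP => [E|_]; [rewrite E ltnn in h | rewrite /= mul0r; ring].
- by case: eqP => [E|_]; [rewrite E ltnn in h | rewrite /= mul0r; ring].
- by rewrite (val_inj h) eqxx /= mul1r; ring.
Qed.
Theorem proposition3 (p : nat) (hp : (0 < p)%N) (a b : 'I_(2 ^ p))
    (hab : (a < b)%N) :
  let m := (2 ^ p)%N in
  let s : 2.-tuple 'I_(2 ^ p) := [tuple a; b] in
  #|[set t : 2.-tuple 'I_(2 ^ p) | is_state t && (boson_amp (Umat p) s t == 0)]|
    = (m ^ 2 %/ 4)%N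
  /\
  #|[set t : 2.-tuple 'I_(2 ^ p) | is_state t && (fermion_amp (Umat p) s t == 0)]|
    = ((m * (m + 1)) %/ 2 - m ^ 2 %/ 4)%N.
Proof.
move=> m s.
set c := chi p a b.
have hsq x : c x * c x = 1.
  by rewrite /c /chi mulrACA !sylv_sq mulr1.
have hsq2 x y : (c x * c y) * (c x * c y) = 1.
  by rewrite mulrACA !hsq mulr1.
have hsum : \sum_(x < 2 ^ p) c (x : nat) = 0.
  rewrite -(big_mkord xpredT c) sylv_orth //; last by rewrite ltn_eqF.
set Tsum := \sum_(x < 2 ^ p) \sum_(y < 2 ^ p) (bz (x <= y)%N * 1).
set Esum := \sum_(x < 2 ^ p) \sum_(y < 2 ^ p) (bz (x <= y)%N * (c x * c y)).
have eT : 2 * Tsum = (m * m + m)%N%:R.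
  rewrite sym_sum // !sumr_const !card_ord /m natrD natrM.
  by rewrite mulr_natr.
have eE : 2 * Esum = m%:R.
  rewrite sym_sum //; last by move=> x y; rewrite mulrC.
  have -> : \sum_(x < 2 ^ p) \sum_(y < 2 ^ p) (c x * c y) = 0.
    transitivity (\sum_(x < 2 ^ p) c x * \sum_(y < 2 ^ p) c y).
      by apply: eq_bigr => x _; rewrite mulr_sumr.
    by rewrite -mulr_suml hsum mul0r.
  by rewrite add0r (eq_bigr (fun _ => 1)) // sumr_const card_ord.
split.
- rewrite card_pairs.
  set Bn := (\sum_(x < 2 ^ p) \sum_(y < 2 ^ p) _)%N.
  have eB : 2 * (Bn%:R : int) = Tsum - Esum.
    rewrite /Bn natr_sum mulr_sumr -sumrB; apply: eq_bigr => x _.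
    rewrite natr_sum mulr_sumr -sumrB; apply: eq_bigr => y _.
    rewrite /is_state /s /= andbT boson_zero /bz.
    by case: (@pm1 _ (hsq2 x y)) => ->; case: (x <= y)%N.
  have H4 : (4 * Bn = m * m)%N.
    apply/eqP; rewrite -(eqr_nat int) natrM.
    have -> : (4%N%:R : int) = 2 * 2 by [].
    by rewrite -mulrA eB mulrBr eT eE natrD addrK.
  by rewrite -mulnn -H4 mulKn.
- rewrite card_pairs.
  set Fn := (\sum_(x < 2 ^ p) \sum_(y < 2 ^ p) _)%N.
  have eF : 2 * (Fn%:R : int) = Tsum + Esum.
    rewrite /Fn natr_sum mulr_sumr -big_split; apply: eq_bigr => x _.
    rewrite natr_sum mulr_sumr -big_split; apply: eq_bigr => y _.
    rewrite /is_state /s /= andbT fermion_zero /bz.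
    by case: (@pm1 _ (hsq2 x y)) => ->; case: (x <= y)%N.
  have H4 : (4 * Fn = m * m + 2 * m)%N.
    apply/eqP; rewrite -(eqr_nat int) natrM.
    have -> : (4%N%:R : int) = 2 * 2 by [].
    rewrite -mulrA eF mulrDr eT eE !natrD natrM -addrA. by rewrite addr0.
  have [k hk] : exists k, m = (2 * k)%N.
    by exists (2 ^ p.-1)%N; rewrite /m -expnS prednK.
  rewrite hk in H4 *.
  have -> : ((2 * k) ^ 2 = 4 * (k * k))%N by rewrite -mulnn; lia.
  have -> : (2 * k * (2 * k + 1) = 2 * (k * (2 * k + 1)))%N by lia.
  rewrite !mulKn //.
  nia.
Qed.
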